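(* Let $d\ge2$, $n\ge1$. For every $n$-qudit unitary $U$, $$\mathrm{CiS}[U]=\max_{O:\ \|O\|_2=1,\ \mathrm{Tr}(O)=0}\big|I[UOU^\dagger]-I[O]\big|.$$
   Context: Let $V=\mathbb{Z}_d\times\mathbb{Z}_d$; for $a=(s,t)\in V$, $P_a=X^sZ^t$ with $X|j\rangle=|j+1\bmod d\rangle$, $Z|j\rangle=e^{2\pi ij/d}|j\rangle$; $P_{\vec a}=\bigotimes_iP_{a_i}$, $|\vec a|=\#\{i:a_i\ne(0,0)\}$. $\|A\|_2=(d^{-n}\mathrm{Tr}(A^\dagger A))^{1/2}$. For $\|O\|_2=1$, $P_O[\vec a]=d^{-2n}|\mathrm{Tr}(OP_{\vec a})|^2$, $I[O]=\sum_{\vec a}|\vec a|P_O[\vec a]$, and $\mathrm{CiS}[U]=\max_{O:\|O\|_2=1}|I[UOU^\dagger]-I[O]|$. *)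

(* Defs.v *)
From HB Require Import structures.
From mathcomp Require Import all_boot all_order all_algebra.
From mathcomp Require Import complex.
From mathcomp Require Import boolp classical_sets reals trigo.
Set Implicit Arguments. Unset Strict Implicit. Unset Printing Implicit Defensive.
Import Order.TTheory GRing.Theory Num.Theory.
Local Open Scope ring_scope.
Local Open Scope complex_scope.
Local Open Scope classical_set_scope.

Section Qudits.
Variable R : realType.
Notation C := (R[i]).
Variables (n d : nat).

Definition basis := {ffun 'I_n -> 'I_d}.
(* an operator on (C^d)^{\otimes n}, given by its matrix entries <x|A|y> *)
Definition op := basis -> basis -> C.

Definition op_mul (A B : op) : op := fun x y => \sum_(z : basis) A x z * B z y.
Definition op_adj (A : op) : op := fun x y => (A y x)^*.
Definition op_id : op := fun x y => (x == y)%:R.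
Definition op_tr (A : op) : C := \sum_(x : basis) A x x.

Definition unitary (U : op) : Prop :=
  op_mul (op_adj U) U = op_id /\ op_mul U (op_adj U) = op_id.

Definition sqmod (z : C) : R := (complex.Re z) ^+ 2 + (complex.Im z) ^+ 2.

Definition norm2 (A : op) : R :=
  Num.sqrt ((d%:R ^+ n)^-1 * complex.Re (op_tr (op_mul (op_adj A) A))).

Definition omega : C := (cos (2 * pi / d%:R)) +i* (sin (2 * pi / d%:R)).

Definition pauli_label := {ffun 'I_n -> 'I_d * 'I_d}.

(* <k| X^s Z^t |j> = omega^(t j) [k = j + s mod d] *)
Definition qudit_pauli (s t : 'I_d) (k j : 'I_d) : C :=
  ((k : nat) == ((j + s) %% d)%N)%:R * omega ^+ (t * j)%N.

(* P_a = tensor product of the X^{s_i} Z^{t_i} *)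
Definition pauli (a : pauli_label) : op :=
  fun x y => \prod_(i < n) qudit_pauli (a i).1 (a i).2 (x i) (y i).

Definition weight (a : pauli_label) : nat :=
  #|[set i : 'I_n | ((a i).1 != 0%N :> nat) || ((a i).2 != 0%N :> nat)]%SET|.

Definition pauli_weight (O : op) (a : pauli_label) : R :=
  (d%:R ^+ (2 * n))^-1 * sqmod (op_tr (op_mul O (pauli a))).

Definition influence (O : op) : R :=
  \sum_(a : pauli_label) (weight a)%:R * pauli_weight O a.

Definition conj_by (U O : op) : op := op_mul (op_mul U O) (op_adj U).

(* CiS[U] = max over ||O||_2 = 1 of |I[U O U^dag] - I[O]|  (max realized as sup) *)
Definition CiS (U : op) : R :=
  sup [set r : R | exists O : op, norm2 O = 1 /\
                     r = `|influence (conj_by U O) - influence O|].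

Definition CiS_traceless (U : op) : R :=
  sup [set r : R | exists O : op, norm2 O = 1 /\ op_tr O = 0 /\
                     r = `|influence (conj_by U O) - influence O|].
End Qudits.

(* Main.v *)
Require Import Defs.
From HB Require Import structures.
From mathcomp Require Import all_boot all_order all_algebra.
From mathcomp Require Import complex.
From mathcomp Require Import boolp classical_sets reals trigo.
From mathcomp Require Import ring lra zify.
Local Open Scope ring_scope.
Import Order.TTheory GRing.Theory Num.Theory.
Set Implicit Arguments. Unset Strict Implicit.

Section Aux.
Variable R : realType.
Variables (n d : nat).
Local Open Scope complex_scope.
Local Notation C := (R[i]).
Local Notation op := (op R n d).
Local Notation basis := (basis n d).

Definition addI (O : op) (c : C) : op := fun x y => O x y + c * op_id R x y.
Definition scl (k : C) (O : op) : op := fun x y => k * O x y.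
Definition tp (O : op) (a : pauli_label n d) : C := op_tr (op_mul O (pauli R a)).

Lemma sum_delta (F : basis -> C) x : \sum_z (x == z)%:R * F z = F x.
Proof.
rewrite (bigD1 x) //= eqxx mul1r big1 ?addr0 // => z hz.
by rewrite eq_sym (negbTE hz) mul0r.
Qed.

Lemma sum_delta' (F : basis -> C) x : \sum_z F z * (z == x)%:R = F x.
Proof.
rewrite (bigD1 x) //= eqxx mulr1 big1 ?addr0 // => z hz.
by rewrite (negbTE hz) mulr0.
Qed.

Lemma tp_addI O c a : tp (addI O c) a = tp O a + c * op_tr (pauli R a).
Proof.
rewrite /tp /op_tr /op_mul /addI /op_id mulr_sumr -big_split /=.
apply: eq_bigr => x _.
under eq_bigr do rewrite mulrDl.
rewrite big_split /=; congr (_ + _).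
under eq_bigr do rewrite -mulrA.
by rewrite -mulr_sumr sum_delta.
Qed.

Lemma tp_scl k O a : tp (scl k O) a = k * tp O a.
Proof.
rewrite /tp /op_tr /op_mul /scl mulr_sumr; apply: eq_bigr => x _.
rewrite mulr_sumr; apply: eq_bigr => z _; by rewrite mulrA.
Qed.

Lemma conj_addI U O c : unitary U -> conj_by U (addI O c) = addI (conj_by U O) c.
Proof.
move=> [_ hU]; apply: funext => x; apply: funext => y.
have E : op_mul U (op_adj U) x y = op_id R x y by rewrite hU.
rewrite /conj_by /addI -E /op_mul /op_id mulr_sumr -big_split /=.
apply: eq_bigr => z _.
under eq_bigr do rewrite mulrDr.
rewrite big_split /= mulrDl; congr (_ + _).
under eq_bigr do rewrite mulrCA.
by rewrite -mulr_sumr sum_delta' mulrA [c * _]mulrC -mulrA.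
Qed.

Lemma conj_scl U O k : conj_by U (scl k O) = scl k (conj_by U O).
Proof.
apply: funext => x; apply: funext => y.
rewrite /conj_by /scl /op_mul mulr_sumr; apply: eq_bigr => z _.
rewrite !mulr_suml mulr_sumr; apply: eq_bigr => w _.
by rewrite !mulrA [U x w * k]mulrC.
Qed.

Lemma sqmod_scl (k : R) z : sqmod (k%:C * z) = k ^+ 2 * sqmod z.
Proof.
case: z => a b; rewrite /sqmod /=; simpc => /=.
idtac.
ring.
Qed.

Lemma influenceE O : influence O =
  \sum_a (weight a)%:R * ((d%:R ^+ (2 * n))^-1 * sqmod (tp O a)).
Proof. by []. Qed.

Lemma influence_scl (k : R) O : influence (scl k%:C O) = k ^+ 2 * influence O.
Proof.
rewrite !influenceE mulr_sumr; apply: eq_bigr => a _.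
rewrite tp_scl sqmod_scl; ring.
Qed.

End Aux.
Section Aux2.
Variable R : realType.
Variables (n d : nat).
Hypothesis hd : (2 <= d)%N.
Local Open Scope complex_scope.
Local Notation C := (R[i]).

Let th : R := 2 * pi / d%:R.

Lemma omegaX k : omega R d ^+ k = cos (k%:R * th) +i* sin (k%:R * th).
Proof.
elim: k => [|k IH]; first by rewrite expr0 !mul0r cos0 sin0.
rewrite exprS IH /omega -/th -nat1r mulrDl mul1r cosD sinD; simpc.
by congr (_ +i* _); ring.
Qed.

Lemma d_gt0 : (0 < d%:R :> R).
Proof. by rewrite ltr0n; case: d hd. Qed.

Lemma omega_d : omega R d ^+ d = 1.
Proof.
rewrite omegaX.
have -> : d%:R * th = pi *+ 2.
  rewrite /th mulrCA mulfV ?mulr1; last by rewrite gt_eqF // d_gt0.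
  by rewrite mulr_natl.
by rewrite cos2pi sin2pi.
Qed.

Lemma omega_neq1 t : (0 < t < d)%N -> omega R d ^+ t != 1.
Proof.
move=> /andP[t0 td]; apply/negP => /eqP.
rewrite omegaX => [[hc _]].
pose y : R := t%:R * pi / d%:R.
have ey : t%:R * th = y *+ 2.
  by rewrite /th /y -mulr_natr; ring.
have y0 : 0 < y < pi.
  have dg := d_gt0.
  apply/andP; split.
    by rewrite /y divr_gt0 // mulr_gt0 ?pi_gt0 // ltr0n.
  rewrite /y ltr_pdivrMr // mulrC ltr_pM2l ?pi_gt0 // ltr_nat //.
have := sin_gt0_pi y0.
move: hc; rewrite ey cos_mulr2n => hc.
have : sin y ^+ 2 = 0.
  rewrite sin2cos2; lra.
by move/eqP; rewrite sqrf_eq0 => /eqP ->; rewrite ltxx.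
Qed.

Lemma geom0 t : (0 < t < d)%N -> \sum_(j < d) omega R d ^+ (t * j) = 0.
Proof.
move=> ht.
have h1 : omega R d ^+ t - 1 != 0 by rewrite subr_eq0 omega_neq1.
have : (omega R d ^+ t - 1) * \sum_(j < d) (omega R d ^+ t) ^+ j = 0.
  by rewrite -subrX1 -exprM mulnC exprM omega_d expr1n subrr.
move/eqP; rewrite mulf_eq0 (negbTE h1) /= => /eqP E; rewrite -[RHS]E.
by apply: eq_bigr => j _; rewrite exprM.
Qed.

Lemma qtr0 (s t : 'I_d) : (s != 0 :> nat) || (t != 0 :> nat) ->
  \sum_(j : 'I_d) qudit_pauli R s t j j = 0.
Proof.
case/orP => hs.
  apply: big1 => j _; rewrite /qudit_pauli.
  suff -> : ((j : nat) == ((j + s) %% d)%N) = false by rewrite mul0r.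
  apply/negbTE/eqP => E.
  have js := ltn_ord j; have ss := ltn_ord s.
  move: E hs; case: (ltnP (j + s) d) => h.
    by rewrite modn_small //; lia.
  have -> : (j + s = (j + s - d) + d)%N by lia.
  rewrite modnDr modn_small; lia.
have [s0|s0] := eqVneq (s : nat) 0%N.
  rewrite -[RHS](@geom0 t); last by rewrite lt0n hs ltn_ord.
  apply: eq_bigr => j _; rewrite /qudit_pauli s0 addn0 modn_small ?ltn_ord //.
  by rewrite eqxx mul1r.
apply: big1 => j _; rewrite /qudit_pauli.
suff -> : ((j : nat) == ((j + s) %% d)%N) = false by rewrite mul0r.
apply/negbTE/eqP => E.
have js := ltn_ord j; have ss := ltn_ord s.
move: E s0; case: (ltnP (j + s) d) => h.
  by rewrite modn_small //; lia.
have -> : (j + s = (j + s - d) + d)%N by lia.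
rewrite modnDr modn_small; lia.
Qed.

Lemma tr_pauli0 (a : pauli_label n d) : weight a != 0%N -> op_tr (pauli R a) = 0.
Proof.
rewrite /weight cards_eq0; case/set0Pn => i; rewrite inE => hi.
rewrite /op_tr /pauli.
rewrite -(bigA_distr_bigA (fun i j => qudit_pauli R (a i).1 (a i).2 j j)) /=.
by rewrite (bigD1 i) //= qtr0 // mul0r.
Qed.

End Aux2.

Section SupLemma.
Variable R : realType.
Local Open Scope classical_set_scope.

Lemma sup_eq_dom (S T : set R) : T `<=` S ->
  (forall r, S r -> exists2 r', T r' & r <= r') -> T !=set0 -> sup S = sup T.
Proof.
move=> TS ST T0.
have S0 : S !=set0 by case: T0 => t Tt; exists t; exact: TS.
have [hT|hT] := pselect (has_ubound T).
  have hS : has_ubound S.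
    case: hT => M HM; exists M => r Sr.
    by case: (ST r Sr) => r' Tr' le; apply: le_trans le (HM r' Tr').
  apply/le_anti/andP; split.
    apply: ge_sup => // r Sr; case: (ST r Sr) => r' Tr' le.
    exact: le_trans le (ub_le_sup hT Tr').
  apply: ge_sup => // t Tt; exact: (ub_le_sup hS (TS _ Tt)).
rewrite !sup_out //.
  by case=> _ hT'; apply: hT.
case=> _ [M HM]; apply: hT; exists M => t Tt; exact: HM (TS _ Tt).
Qed.
End SupLemma.

Section Main.
Variable R : realType.
Variables (n d : nat).
Hypothesis hd : (2 <= d)%N.
Local Open Scope complex_scope.
Local Notation C := (R[i]).
Local Notation op := (op R n d).
Local Notation basis := (basis n d).

Definition hs (A : op) : R := \sum_x \sum_z sqmod (A z x).

Lemma ReD : {morph (@complex.Re R) : u v / u + v}.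
Proof. by case=> ? ? [] ? ?. Qed.

Lemma Re_sum (I : finType) (F : I -> C) : complex.Re (\sum_i F i) = \sum_i complex.Re (F i).
Proof. exact: (big_morph _ ReD). Qed.

Lemma Im_sum (I : finType) (F : I -> C) : complex.Im (\sum_i F i) = \sum_i complex.Im (F i).
Proof. apply: (big_morph _ _ (erefl _)); by case=> ? ? [] ? ?. Qed.

Lemma hsE (A : op) : norm2 A = Num.sqrt ((d%:R ^+ n)^-1 * hs A).
Proof.
rewrite /norm2 /hs; congr (Num.sqrt (_ * _)).
rewrite /op_tr /op_mul /op_adj Re_sum; apply: eq_bigr => x _.
rewrite Re_sum; apply: eq_bigr => z _.
by case: (A z x) => a b; rewrite /sqmod /=; ring.
Qed.

Lemma sqmod_ge0 (z : C) : 0 <= sqmod z.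
Proof. by rewrite /sqmod addr_ge0 // sqr_ge0. Qed.

Lemma hs_ge0 A : 0 <= hs A.
Proof. by apply: sumr_ge0 => x _; apply: sumr_ge0 => z _; exact: sqmod_ge0. Qed.

Lemma hs_scl (k : R) A : hs (scl k%:C A) = k ^+ 2 * hs A.
Proof.
rewrite /hs mulr_sumr; apply: eq_bigr => x _.
rewrite mulr_sumr; apply: eq_bigr => z _; exact: sqmod_scl.
Qed.

Lemma tr_scl k (A : op) : op_tr (scl k A) = k * op_tr A.
Proof. by rewrite /op_tr /scl mulr_sumr. Qed.

Lemma natC (N : nat) : (N%:R : C) = (N%:R : R) +i* 0.
Proof.
elim: N => // N IH; rewrite -!natr1 IH.
by rewrite -[1 : C]/(1 +i* 0); simpc.
Qed.

Lemma card_basis : #|{: basis}| = (d ^ n)%N.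
Proof. by rewrite card_ffun !card_ord. Qed.

Lemma tr_addI (A : op) c : op_tr (addI A c) = op_tr A + c * (d ^ n)%:R.
Proof.
rewrite /op_tr /addI big_split /=; congr (_ + _).
rewrite -mulr_sumr /op_id; congr (_ * _).
under eq_bigr do rewrite eqxx.
by rewrite sumr_const card_basis.
Qed.

Lemma sqmod_shift (w c : C) (b : bool) :
  sqmod (w + (- c) * b%:R) =
  sqmod w + b%:R * (sqmod c - 2 * (complex.Re w * complex.Re c + complex.Im w * complex.Im c)).
Proof.
case: b; last by rewrite !mulr0 addr0 mul0r addr0.
rewrite !mulr1 mul1r; case: w => a1 b1; case: c => a2 b2.
rewrite /sqmod /=; simpc => /=; ring.
Qed.

Lemma hs_addI (A : op) c : op_tr A = c * (d ^ n)%:R ->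
  hs (addI A (- c)) = hs A - (d ^ n)%:R * sqmod c.
Proof.
case: c => ca cb htr.
rewrite /hs /addI /op_id.
under eq_bigr do under eq_bigr do rewrite sqmod_shift.
under eq_bigr do rewrite big_split /=.
rewrite big_split /=.
have E : forall x : basis, \sum_(z : basis) ((z == x)%:R : R) *
    (sqmod (ca +i* cb) - 2 * (complex.Re (A z x) * complex.Re (ca +i* cb) + complex.Im (A z x) * complex.Im (ca +i* cb)))
    = sqmod (ca +i* cb) - 2 * (complex.Re (A x x) * complex.Re (ca +i* cb) + complex.Im (A x x) * complex.Im (ca +i* cb)).
  move=> x; rewrite (bigD1 x) //= eqxx mul1r big1 ?addr0 // => z hz.
  by rewrite (negbTE hz) mul0r.
rewrite (eq_bigr _ (fun x _ => E x)).
rewrite big_split /= sumr_const card_basis sumrN.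
rewrite -mulr_sumr big_split /= -!mulr_suml.
have hRe : \sum_x complex.Re (A x x) = (d ^ n)%:R * ca.
  rewrite -Re_sum; move: htr; rewrite /op_tr => ->.
  by rewrite natC /=; ring.
have hIm : \sum_x complex.Im (A x x) = (d ^ n)%:R * cb.
  rewrite -Im_sum; move: htr; rewrite /op_tr => ->.
  by rewrite natC /=; ring.
rewrite hRe hIm /sqmod -mulr_natl /=; ring.
Qed.


Lemma sqmod0 : sqmod (0 : C) = 0.
Proof. by rewrite /sqmod /= expr0n addr0. Qed.

Lemma sqmodR (r : R) : sqmod (r%:C) = r ^+ 2.
Proof. by rewrite /sqmod /= expr0n addr0. Qed.

Lemma sqmod_eq0 (z : C) : sqmod z = 0 -> z = 0.
Proof.
case: z => a b; rewrite /sqmod /= => h.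
have := sqr_ge0 a; have := sqr_ge0 b => ga gb.
have ha : a ^+ 2 = 0 by apply/eqP; rewrite eq_le sqr_ge0 andbT; lra.
have hb : b ^+ 2 = 0 by apply/eqP; rewrite eq_le sqr_ge0 andbT; lra.
move/eqP: ha; move/eqP: hb; rewrite !sqrf_eq0 => /eqP -> /eqP ->; done.
Qed.

Definition fU (U O : op) : R := @influence R n d (conj_by U O) - @influence R n d O.

Lemma influence_addI (O : op) c : influence (addI O c) = influence O.
Proof.
rewrite !influenceE; apply: eq_bigr => a _.
have [->|h] := eqVneq (weight a) 0%N; first by rewrite !mulr0n !mul0r.
by rewrite tp_addI (tr_pauli0 R hd) // mulr0 addr0.
Qed.

Lemma fU_addI (U O : op) c : unitary U -> fU U (addI O c) = fU U O.
Proof. by move=> hU; rewrite /fU conj_addI // !influence_addI. Qed.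

Lemma fU_scl (U O : op) (k : R) : fU U (scl k%:C O) = k ^+ 2 * fU U O.
Proof. by rewrite /fU conj_scl !influence_scl mulrBr. Qed.

Lemma dn_gt0 : (0 < (d ^ n)%:R :> R).
Proof. by rewrite ltr0n expn_gt0; case: d hd. Qed.

Lemma reduce (U : op) (hU : unitary U) (O : op) : norm2 O = 1 ->
  (exists O'', norm2 O'' = 1 /\ op_tr O'' = 0 /\ `|fU U O| <= `|fU U O''|)
  \/ fU U O = 0.
Proof.
move=> hN.
have Dpos := dn_gt0.
set D : R := (d ^ n)%:R in Dpos.
have hsO : hs O = D.
  move: hN; rewrite hsE -natrX -/D => hN.
  have x0 : 0 <= D^-1 * hs O by rewrite mulr_ge0 ?hs_ge0 // invr_ge0 ltW.
  have := sqr_sqrtr x0; rewrite hN expr1n => x1.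
  by rewrite -[hs O]mul1r -(mulfV (lt0r_neq0 Dpos)) -mulrA -x1 mulr1.
have DC : ((d ^ n)%:R : C) != 0 by rewrite pnatr_eq0 expn_eq0 negb_and; case: d hd.
pose c : C := op_tr O / (d ^ n)%:R.
have htr : op_tr O = c * (d ^ n)%:R by rewrite /c divfK.
pose O' := addI O (- c).
have hs' : hs O' = D - D * sqmod c by rewrite /O' hs_addI // hsO.
have tr' : op_tr O' = 0 by rewrite /O' tr_addI htr mulNr subrr.
have f' : fU U O = fU U O' by rewrite /O' fU_addI.
have [h0|hpos] := eqVneq (hs O') 0.
  right.
  have ez : forall x y, O' x y = 0.
    move=> x y.
    have nn : forall z : basis, true -> 0 <= \sum_w sqmod (O' w z).
      by move=> z _; apply: sumr_ge0 => w _; exact: sqmod_ge0.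
    move: h0; rewrite /hs => /(psumr_eq0P nn) /(_ y isT) h1.
    have nn2 : forall w : basis, true -> 0 <= sqmod (O' w y).
      by move=> w _; exact: sqmod_ge0.
    move: h1 => /(psumr_eq0P nn2) /(_ x isT); exact: sqmod_eq0.
  have eO : O' = scl (0 : R)%:C O'.
    by apply: funext => x; apply: funext => y; rewrite /scl ez mulr0.
  by rewrite f' eO fU_scl expr0n mul0r.
left.
have hp : 0 < hs O' by rewrite lt_def hpos hs_ge0.
have hle : hs O' <= D by rewrite hs' gerBl mulr_ge0 ?sqmod_ge0 // ltW.
pose lam := Num.sqrt (D / hs O').
have lam2 : lam ^+ 2 = D / hs O' by rewrite sqr_sqrtr // divr_ge0 // ltW.
exists (scl lam%:C O'); split; [|split].
- rewrite hsE hs_scl lam2 -natrX -/D.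
  by rewrite divfK ?lt0r_neq0 // mulVf ?lt0r_neq0 // sqrtr1.
- by rewrite tr_scl tr' mulr0.
- rewrite fU_scl normrM lam2 f' (ger0_norm (ltW (divr_gt0 Dpos hp))).
  apply: ler_peMl; first exact: normr_ge0.
  by rewrite ler_pdivlMr // mul1r.
Qed.

Hypothesis hn : (1 <= n)%N.

Lemma exists_tl : exists O : op, norm2 O = 1 /\ op_tr O = 0.
Proof.
pose e0 : basis := [ffun _ => Ordinal (ltnW hd)].
pose e1 : basis := [ffun _ => Ordinal hd].
have ne : e0 != e1.
  apply/eqP => /(congr1 (fun f : basis => val (f (Ordinal hn)))).
  by rewrite !ffunE.
have Dpos := dn_gt0.
set D : R := (d ^ n)%:R in Dpos.
pose O0 : op := fun z x => if (z == e0) && (x == e1) then (Num.sqrt D)%:C else 0.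
exists O0; split.
  rewrite hsE -natrX -/D.
  suff -> : hs O0 = D by rewrite mulVf ?gt_eqF // sqrtr1.
  rewrite /hs (bigD1 e1) //= [X in _ + X]big1 ?addr0; last first.
    by move=> x hx; apply: big1 => z _; rewrite /O0 (negbTE hx) andbF sqmod0.
  rewrite (bigD1 e0) //= [X in _ + X]big1 ?addr0; last first.
    by move=> z hz; rewrite /O0 (negbTE hz) sqmod0.
  by rewrite /O0 !eqxx /= sqmodR sqr_sqrtr // ltW.
apply: big1 => x _; rewrite /O0.
case: (eqVneq x e0) => [->|]; last by [].
by rewrite (negbTE ne).
Qed.

End Main.

Theorem mainTheorem19 (R : realType) (n d : nat) (hd : (2 <= d)%N) (hn : (1 <= n)%N)
  (U : op R n d) (hU : unitary U) :
  CiS U = CiS_traceless U.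
Proof.
rewrite /CiS /CiS_traceless; apply: sup_eq_dom.
- by move=> r [O [h1 [_ ->]]]; exists O.
- move=> r [O [h1 ->]].
  case: (reduce hd hU h1) => [[O'' [h1'' [htr'' hle]]] | h0].
    by exists `|fU U O''|; [exists O'' | exact: hle].
  have [O0 [h0' ht0]] := exists_tl R hd hn.
  exists `|fU U O0|; first by exists O0.
  have -> : `|influence (conj_by U O) - influence O| = 0.
    by move: h0; rewrite /fU => ->; rewrite normr0.
  exact: normr_ge0.
- have [O0 [h0' ht0]] := exists_tl R hd hn.
  by exists `|fU U O0|; exists O0.
Qed.
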